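(* Let $X$ be a real Banach space, let $x\in S_X$ and $x^*\in S_{X^*}$ with $x^*(x)=1$. Let $(x_n^* )_{n\in\mathbb N}\subset B_{X^*}$ be a sequence such that $x^*$ is a $w^*$-cluster point of $(x_n^* )$ (every $w^*$-neighbourhood of $x^*$ contains $x_n^*$ for infinitely many $n$). Assume there is a sequence $(U_n)_{n\in\mathbb N}$ of relatively $w^*$-open subsets of $J(x)$ such that \[\bigcup_n U_n=\bigcup_n \overline{U_n}^{w^*}=J(x)\setminus\{x^*\}.\] Then there is a subsequence $(n_k)$ such that $x_{n_k}^*\to x^*$ in the $w^*$-topology as $k\to\infty$.
   Context: $B_X$, $S_X$ denote the closed unit ball and unit sphere; $J(x)=\{y^*\in S_{X^*}: y^*(x)=1\}$ for $x\in S_X$. *)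

(* Defs.v *)
From HB Require Import structures.
From mathcomp Require Import all_boot all_order all_algebra.
From mathcomp Require Import all_classical all_reals all_analysis.
Set Implicit Arguments. Unset Strict Implicit. Unset Printing Implicit Defensive.
Import Order.TTheory GRing.Theory Num.Theory.
Import numFieldNormedType.Exports.
Local Open Scope classical_set_scope.
Local Open Scope ring_scope.

(* The weak-star topology
   on X^* is the topology of pointwise convergence, i.e. the subspace topology
   induced by {ptws X -> R} (the product topology on R^X). *)
Definition dual (R : realType) (X : normedModType R) : set {ptws X -> R^o} :=
  [set f | (forall (a : R) (u v : X), f (a *: u + v) = a * f u + f v)
           /\ continuous (f : X -> R^o)].

Definition dualnorm (R : realType) (X : normedModType R) (f : X -> R) : R :=
  sup [set `|f u| | u in [set u : X | `|u| <= 1]].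

Definition dual_ball (R : realType) (X : normedModType R) : set {ptws X -> R^o} :=
  [set f | @dual R X f /\ dualnorm f <= 1].
Definition dual_sphere (R : realType) (X : normedModType R) : set {ptws X -> R^o} :=
  [set f | @dual R X f /\ dualnorm f = 1].

Definition Jset (R : realType) (X : normedModType R) (x : X) : set {ptws X -> R^o} :=
  [set f | @dual_sphere R X f /\ f x = 1].

Definition rel_wstar_open (R : realType) (X : normedModType R)
    (A U : set {ptws X -> R^o}) : Prop :=
  exists V : set {ptws X -> R^o}, open V /\ U = V `&` A.

(* Main.v *)
Require Import Defs.
From HB Require Import structures.
From mathcomp Require Import all_boot all_order all_algebra.
From mathcomp Require Import all_classical all_reals all_analysis.
Import Order.TTheory GRing.Theory Num.Theory.
Import numFieldNormedType.Exports.
Local Open Scope classical_set_scope.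
Local Open Scope ring_scope.
Lemma lin_scale (R : realType) (X : normedModType R) (f : {ptws X -> R^o}) :
  (forall (a : R) (u v : X), f (a *: u + v) = a * f u + f v) ->
  f 0 = 0 /\ forall (a : R) u, f (a *: u) = a * f u.
Proof.
move=> lin.
have f0 : f 0 = 0.
  have := lin 1 0 0; rewrite scaler0 addr0 mul1r.
  by move/(congr1 (fun t => t - f 0)); rewrite subrr addrK => <-.
by split=> // a u; rewrite -[a *: u]addr0 lin f0 addr0.
Qed.

Lemma dual_bound (R : realType) (X : normedModType R) (f : {ptws X -> R^o}) :
  @dual R X f -> dualnorm f <= 1 -> forall u, `|f u| <= `|u|.
Proof.
move=> [lin cont] n1.
have [f0 fZ] := @lin_scale _ _ f lin.
have : \forall y \near (0 : X), `|f 0 - f y| < 1.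
  by have /cvgrPdist_lt := cont 0; apply; exact: ltr01.
rewrite f0 => /nbhs_ballP[d /= d0 Hd].
have hs : has_sup [set `|f u| | u in [set u : X | `|u| <= 1]].
  split; first by exists `|f 0|, 0 => //=; rewrite normr0.
  exists (2 / d) => _ [u /= u1 <-].
  have hv : ball (0 : X) d ((d / 2) *: u).
    rewrite -ball_normE /= sub0r normrN normrZ.
    rewrite (@le_lt_trans _ _ (d / 2)) //; last by rewrite ltr_pdivrMr // ltr_pMr // ltr1n.
    rewrite -[leRHS]mulr1 ger0_norm; last by rewrite divr_ge0 ?ltW.
    by rewrite ler_pM2l // divr_gt0.
  have h := Hd _ hv; rewrite /= sub0r normrN fZ normrM in h.
  rewrite ger0_norm in h; last by rewrite divr_ge0 // ltW.
  apply: ltW; rewrite -ltr_pdivlMl ?divr_gt0 // in h.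
  by rewrite mulr1 invf_div in h.
move=> u; have [->|u0] := eqVneq u 0; first by rewrite f0 !normr0.
have nu0 : 0 < `|u| by rewrite normr_gt0.
have w1 : Num.norm ((Num.norm u)^-1 *: u) <= 1.
  by rewrite normrZ normfV normr_id mulVf // gt_eqF.
have /(sup_upper_bound hs) : [set `|f u| | u in [set u : X | `|u| <= 1]]
  `|f ((Num.norm u)^-1 *: u)| by exists ((Num.norm u)^-1 *: u).
rewrite fZ normrM normfV normr_id => h.
have := le_trans h n1; rewrite ler_pdivrMl // mulr1 //.
Qed.

Definition Kset (R : realType) (X : normedModType R) : set {ptws X -> R^o} :=
  [set f | (forall (a : R) (u v : X), f (a *: u + v) = a * f u + f v)
           /\ forall u, `|f u| <= `|u|].

Lemma ev_cont (R : realType) (X : normedModType R) (w : X) :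
  continuous (fun f : {ptws X -> R^o} => f w).
Proof. exact: (@proj_continuous X (fun _ => R^o) w). Qed.

Lemma Phi_cont (R : realType) (X : normedModType R) a u v:
  continuous (fun f : {ptws X -> R^o} => f (a *: u + v) - (a * f u + f v)).
Proof.
move=> h.
have e1 := ev_cont R X (a *: u + v) h.
have e2 := ev_cont R X u h.
have e3 := ev_cont R X v h.
have := @cvgB R R^o _ (nbhs h) _ _ _ _ _ e1 (@cvgD R R^o _ (nbhs h) _ _ _ _ _ (@cvgMr R^o _ (nbhs h) _ _ a _ e2) e3).
exact.
Qed.

Lemma Psi_cont (R : realType) (X : normedModType R) u:
  continuous (fun f : {ptws X -> R^o} => `|f u|).
Proof.
move=> h.
have e2 := ev_cont R X u h.
have := @cvg_norm R R^o _ (nbhs h) _ _ _ e2.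
exact.
Qed.

Lemma Kset_closed (R : realType) (X : normedModType R) : closed (@Kset R X).
Proof.
have cl (S : set {ptws X -> R^o}) : closed S -> @Kset R X `<=` S -> closure (@Kset R X) `<=` S.
  by move=> cS KS; apply: subset_trans cS; exact: closureS.
move=> g Kg; split.
  move=> a u v.
  have cP := Phi_cont R X a u v.
  have /cl : closed ((fun f : {ptws X -> R^o} => f (a *: u + v) - (a * f u + f v)) @^-1` [set (0:R^o)]).
    apply: (proj1 (continuous_closedP _) cP). exact: (@closed_eq R^o 0).
  move=> H.
  have KS : Kset R X `<=` (fun f : {ptws X -> R^o} => f (a *: u + v) - (a * f u + f v)) @^-1` [set (0:R^o)].
    by move=> f [lf _]; rewrite /= lf subrr.
  have := H KS g Kg.
  by rewrite /= => /eqP; rewrite subr_eq0 => /eqP.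
move=> u.
have cP := Psi_cont R X u.
have /cl : closed ((fun f : {ptws X -> R^o} => `|f u|) @^-1` [set t : R | t <= `|u|]).
  apply: (proj1 (continuous_closedP _) cP). exact: (@closed_le R).
move=> H.
have KS : Kset R X `<=` (fun f : {ptws X -> R^o} => `|f u|) @^-1` [set t : R | t <= `|u|].
  move=> f [_ bf]; exact: bf.
exact: (H KS g Kg).
Qed.

Lemma Kset_compact (R : realType) (X : normedModType R) : compact (@Kset R X).
Proof.
have cB : compact [set f : {ptws X -> R^o} | forall u, `[- `|u|, `|u|]%classic (f u)].
  exact: (@tychonoff X (fun _ => R^o) (fun u => `[- `|u|, `|u|]%classic) (fun u => @segment_compact R _ _)).
apply: (subclosed_compact ((Kset_closed R X)) cB).
by move=> f [_ bf] u /=; rewrite in_itv /= -ler_norml.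
Qed.

Lemma ball_K (R : realType) (X : normedModType R) f :
  @dual_ball R X f -> Kset R X f.
Proof. by move=> [[lin c] n]; split => //; apply: dual_bound. Qed.

Lemma K_J (R : realType) (X : normedModType R) (x : X) f :
  `|x| = 1 -> Kset R X f -> f x = 1 -> Jset x f.
Proof.
move=> x1 [lin bf] fx; split => //; split.
  split => // p.
  have [f0 fZ] := @lin_scale _ _ f lin.
  apply/cvgrPdist_lt => e e0.
  apply/nbhs_ballP; exists e => //= y; rewrite -ball_normE /= => hy.
  have -> : f p - f y = f (p - y).
    by rewrite -[in RHS](scale1r p) lin mul1r -[- y]scaleN1r fZ mulN1r.
  exact: le_lt_trans (bf _) hy.
apply/eqP; rewrite eq_le; apply/andP; split.
  apply: ge_sup; first by exists `|f 0|, 0 => //=; rewrite normr0.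
  by move=> _ [u /= u1 <-]; exact: le_trans (bf u) u1.
have hs : has_sup [set `|f u| | u in [set u : X | `|u| <= 1]].
  split; first by exists `|f 0|, 0 => //=; rewrite normr0.
  by exists 1 => _ [u /= u1 <-]; exact: le_trans (bf u) u1.
have /(sup_upper_bound hs) : [set `|f u| | u in [set u : X | `|u| <= 1]] `|f x|.
  by exists x => //=; rewrite x1.
by rewrite fx normr1.
Qed.

Lemma cluster_closed (T : topologicalType) (G : set_system T) (g : T) (S : set T) :
  cluster G g -> G S -> closed S -> S g.
Proof.
move=> cg GS cS; apply: cS => B nB.
by have := cg S B GS nB.
Qed.

Theorem proposition2p2 (R : realType) (X : completeNormedModType R)
  (x : X) (xstar : {ptws X -> R^o}) (xs : nat -> {ptws X -> R^o})
  (U : nat -> set {ptws X -> R^o}) :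
  `|x| = 1 ->
  @dual_sphere R X xstar ->
  xstar x = 1 ->
  (forall n, @dual_ball R X (xs n)) ->
  (forall V : set {ptws X -> R^o}, nbhs xstar V ->
     forall N : nat, exists2 n : nat, (N <= n)%N & V (xs n)) ->
  (forall n, U n `<=` Jset x /\ rel_wstar_open (Jset x) (U n)) ->
  \bigcup_n U n = Jset x `\ xstar ->
  \bigcup_n closure (U n) = Jset x `\ xstar ->
  exists nk : nat -> nat, (forall k, (nk k < nk k.+1)%N) /\
    (xs \o nk) @ \oo --> xstar.
Proof.
move=> x1 sph xsx xsb clu Uh Ucup Ucl.
have Wex n : exists2 W : set {ptws X -> R^o}, nbhs xstar W & closure W `<=` ~` closure (U n).
  apply: uniform_regular; apply: open_nbhs_nbhs; split.
    exact: closed_openC (@closed_closure _ _).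
  move=> cl.
  have : (\bigcup_n closure (U n)) xstar by exists n.
  by rewrite Ucl => -[_ /(_ erefl)].
pose W n := s2val (cid2 (Wex n)).
have Wn n : nbhs xstar (W n) by rewrite /W; case: cid2.
have Wc n : closure (W n) `<=` ~` closure (U n) by rewrite /W; case: cid2.
pose V k := [set f : {ptws X -> R^o} | (forall i, (i <= k)%N -> W i f) /\ 1 - k.+1%:R^-1 < f x].
have Vn k : nbhs xstar (V k).
  have WI : nbhs xstar [set f : {ptws X -> R^o} | forall i, (i <= k)%N -> W i f].
    elim: k => [|k IH].
      by apply: filterS (Wn 0) => f Wf i; rewrite leqn0 => /eqP ->.
    apply: filterS (filterI IH (Wn k.+1)) => f [Hf Wf] i.
    by rewrite leq_eqVlt => /orP[/eqP ->|]; [|rewrite ltnS; apply: Hf].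
  have EX : nbhs xstar [set f : {ptws X -> R^o} | 1 - k.+1%:R^-1 < f x].
    have := ev_cont R X x xstar; move/cvgrPdist_lt.
    have e0 : 0 < k.+1%:R^-1 :> R by rewrite invr_gt0 ltr0n.
    move=> /(_ _ e0); apply: filterS => f /=; rewrite xsx => h.
    by rewrite ltrBlDr -ltrBlDl; exact: le_lt_trans (ler_norm _) h.
  by apply: filterS (filterI WI EX) => f [Hf Hx]; split.
have pex k N : exists2 n : nat, (N <= n)%N & V k (xs n) := clu _ (Vn k) N.
pose pk k N := s2val (cid2 (pex k N)).
have pk1 k N : (N <= pk k N)%N by rewrite /pk; case: cid2.
have pk2 k N : V k (xs (pk k N)) by rewrite /pk; case: cid2.
pose nk := fix nk (k : nat) : nat := match k with 0 => pk 0 0 | k'.+1 => pk k'.+1 (nk k').+1 end.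
have nkV k : V k (xs (nk k)) by case: k => [|k] /=; apply: pk2.
exists nk; split; first by move=> k /=; apply: pk1.
move=> O hO; apply: contrapT => nO.
pose I := O°.
have hI : nbhs xstar I := nbhs_interior hO.
pose Y : set_system {ptws X -> R^o} := (xs \o nk) @ \oo.
pose G := within (~` I) Y.
have GF : ProperFilter G.
  apply: (@Build_ProperFilter _ G _ (@within_filter _ (~` I) Y _)).
  move=> G0; apply: nO.
  have G1 : Y [set z | ~ I z -> False] := G0.
  apply: (@filterS _ Y _ _ _ _ G1) => z hz.
  by apply: interior_subset; apply: contrapT.
have GK : G (Kset R X).
  have G1 : \forall k \near \oo, ~ I (xs (nk k)) -> Kset R X (xs (nk k)).
    by apply: nearW => k _; apply: ball_K; exact: xsb.
  exact: G1.
have [g [Kg cg]] := Kset_compact R X G GF GK.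
have nIg : ~ I g.
  move=> Ig.
  have nIg' : nbhs g I by apply: open_nbhs_nbhs; split => //; exact: open_interior.
  have GnI : G (~` I).
    have G1 : \forall k \near \oo, ~ I (xs (nk k)) -> ~ I (xs (nk k)).
      by apply: nearW => k.
    exact: G1.
  by have [z [nz Iz]] := cg _ _ GnI nIg'.
have gneq : g <> xstar by move=> gx; apply: nIg; rewrite gx; exact: nbhs_singleton.
have gx1 : g x = 1.
  apply/eqP; rewrite eq_le; apply/andP; split.
    by have := (proj2 Kg) x; rewrite x1; apply: le_trans; exact: ler_norm.
  apply/ler_addgt0Pr => e e0.
  have GS : G [set f : {ptws X -> R^o} | 1 - e <= f x].
    have := near_infty_natSinv_lt (PosNum e0).
    apply: filterS => k /= hk _.
    have [_ /ltW h] := nkV k.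
    apply: le_trans h; rewrite lerB //; exact: ltW.
  have cS : closed [set f : {ptws X -> R^o} | 1 - e <= f x].
    exact: ((proj1 (continuous_closedP _) (ev_cont R X x)) _ (@closed_ge R^o (1 - e))).
  have := cluster_closed _ _ _ _ cg GS cS.
  by rewrite /= lerBlDr.
have gW n : closure (W n) g.
  move=> B nB.
  have GW : G (W n).
    apply: filterS (nbhs_infty_ge n) => k /= hk _.
    by have [h _] := nkV k; apply: h.
  exact: cg _ _ GW nB.
have gJ : (Jset x `\ xstar) g by split => //; exact: K_J.
rewrite -Ucup in gJ; case: gJ => n _ Ung.
by apply: (Wc n _ (gW n)); apply: subset_closure.
Qed.
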